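(* Let $K$ be a number field and $C$ the correspondence $g(y)=f(x)$ with $f,g\in K[z]$, $\deg f=d>\deg g=e\ge1$. Let $P$ be a path of $C$ with entries in $\overline{K}$. Then $v\mapsto G_C(P,v)$ is a measurable function on $M_{\overline{K}}$, the limit $\hat h_C(P)=\lim_{n\to\infty}(e/d)^nh(\pi(\sigma^n(P)))$ exists, and \[\hat h_C(P)=\int_{M_{\overline{K}}}G_C(P,v)\,d\mu(v).\]
   Context: $C=\{(a,b)\in\overline{K}^2:g(b)=f(a)\}$. A path is $P=(x_n)_{n\ge0}$ with $(x_n,x_{n+1})\in C$; $\pi(P)=x_0$, $\sigma(P)=(x_{n+1})_n$. $G_C(P,v)=\lim_n(e/d)^n\log^+|\pi(\sigma^nP)|_v$. $h$ is the absolute logarithmic Weil height. $M_{\overline{K}}$ is the set of absolute values on $\overline{K}$ extending the (normalized) places of $K$, equipped with a $\sigma$-algebra and measure $\mu$ such that for every finite extension $L/K$ and place $w$ of $L$ the set of $v$ restricting to $w$ is measurable with measure $[L_w:K_w]/[L:K]$, and $h(\alpha)=\int\log^+|\alpha|_v\,d\mu(v)$ for all $\alpha\in\overline{K}$. *)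

(* Defs.v *)
From HB Require Import structures.
From mathcomp Require Import all_boot all_order all_algebra all_field.
From mathcomp Require Import all_classical all_reals all_analysis.
Set Implicit Arguments. Unset Strict Implicit. Unset Printing Implicit Defensive.
Import Order.TTheory GRing.Theory Num.Theory.
Import numFieldNormedType.Exports.
Local Open Scope classical_set_scope.
Local Open Scope ring_scope.

(* algC is the field of algebraic numbers, i.e. \overline{Q} = \overline{K}
   for any number field K. *)

Definition algCtoR (R : realType) (x : algC) : R :=
  sup [set (ratr q : R) | q in [set q : rat | (ratr q : algC) <= x]].

Definition minQpoly (x : algC) : {poly rat} := sval (minCpolyP x).

(* Leading coefficient of the primitive integer minimal polynomial of x:
   the lcm of the denominators of the coefficients of the monic one. *)
Definition minZlead (x : algC) : nat :=
  \big[lcmn/1%N]_(i < size (minQpoly x)) `|denq (minQpoly x)`_i|%N.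

Definition conjugates (x : algC) : seq algC :=
  sval (closed_field_poly_normal (minCpoly x)).

Definition logp (R : realType) (t : R) : R := ln (Num.max 1 t).

(* Absolute logarithmic Weil height, via the Mahler measure of the
   primitive integer minimal polynomial:
   h(x) = (log a_0 + sum_{conjugates y} log^+ |y|) / deg x. *)
Definition weil_height (R : realType) (x : algC) : R :=
  ((size (minCpoly x)).-1%:R)^-1 *
  (ln ((minZlead x)%:R : R) +
   \sum_(y <- conjugates x) logp (algCtoR R `|y|)).

Definition is_absval (R : realType) (a : algC -> R) : Prop :=
  [/\ forall x, a x = 0 <-> x = 0,
      forall x y, a (x * y) = a x * a y &
      forall x y, a (x + y) <= a x + a y].

(* The absolute value extends one of the normalized places of Q: either the
   usual archimedean absolute value, or a p-adic one with |p| = 1/p. *)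
Definition extends_place_of_Q (R : realType) (a : algC -> R) : Prop :=
  (forall q : rat, a (ratr q) = `|(ratr q : R)|) \/
  (exists p : nat, [/\ prime p, a p%:R = (p%:R : R)^-1 &
      forall l : nat, prime l -> l != p -> a l%:R = 1]).

Definition is_path (f g : {poly algC}) (P : nat -> algC) : Prop :=
  forall n, g.[P n.+1] = f.[P n].

(* (e/d)^n log^+ |pi(sigma^n P)|_v, whose limit is G_C(P, v) *)
Definition G_seq (R : realType) (d e : nat) (a : algC -> R)
  (P : nat -> algC) (n : nat) : R :=
  ((e%:R / d%:R) ^+ n) * logp (a (P n)).

Definition G_C (R : realType) (d e : nat) (a : algC -> R)
  (P : nat -> algC) : R :=
  limn (G_seq d e a P).

(* Main.v *)
Require Import Defs.
From HB Require Import structures.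
From mathcomp Require Import all_boot all_order all_algebra all_field.
From mathcomp Require Import all_classical all_reals all_analysis.
From mathcomp Require Import ring lra.
Import Order.TTheory GRing.Theory Num.Theory.
Import numFieldNormedType.Exports.
Local Open Scope classical_set_scope.
Local Open Scope ring_scope.
Set Implicit Arguments. Unset Strict Implicit.

Section AV.
Variables (R : realType) (a : algC -> R).
Hypothesis ha : is_absval a.

Lemma av0 : a 0 = 0.
Proof. by case: ha => h _ _; apply/h. Qed.

Lemma av_neq0 {x} : x != 0 -> a x != 0.
Proof. by case: ha => h _ _ xn0; apply/eqP => /h /eqP; rewrite (negbTE xn0). Qed.

Lemma avM x y : a (x * y) = a x * a y.
Proof. by case: ha. Qed.

Lemma avD x y : a (x + y) <= a x + a y.
Proof. by case: ha. Qed.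

Lemma av1 : a 1 = 1.
Proof.
have h := avM 1 1; rewrite mulr1 in h.
have n0 : a 1 != 0 by apply: av_neq0; exact: oner_neq0.
by apply: (mulfI n0); rewrite -h mulr1.
Qed.

Lemma avX x n : a (x ^+ n) = a x ^+ n.
Proof. elim: n => [|n IH]; first by rewrite !expr0 av1. by rewrite !exprS avM IH. Qed.

Lemma avN1 : a (-1) = 1.
Proof.
have h1 : a (-1) ^+ 2 = 1 by rewrite -avX sqrrN expr1n av1.
have h2 : 0 <= a (-1) by rewrite -sqrCi avX sqr_ge0.
move/eqP: h1; rewrite sqrf_eq1 => /orP[/eqP //|/eqP h].
by move: h2; rewrite h ler0N1.
Qed.

Lemma avN x : a (- x) = a x.
Proof. by rewrite -mulN1r avM avN1 mul1r. Qed.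

Lemma av_ge0 x : 0 <= a x.
Proof.
have := avD x (- x); rewrite subrr av0 avN.
move=> h; lra.
Qed.

Lemma avV x : a x^-1 = (a x)^-1.
Proof.
have [->|xn0] := eqVneq x 0; first by rewrite invr0 av0 invr0.
have h := avM x x^-1; rewrite mulfV // av1 in h.
by rewrite -(mulKf (av_neq0 xn0) (a x^-1)) -h mulr1.
Qed.

Lemma av_sum I (s : seq I) (P : pred I) (t : I -> algC) :
  a (\sum_(i <- s | P i) t i) <= \sum_(i <- s | P i) a (t i).
Proof.
elim/big_rec2: _ => [|i y1 y2 _ IH]; first by rewrite av0.
exact: le_trans (avD _ _) (lerD (lexx _) IH).
Qed.
End AV.

Lemma bernoulli_ineq (R : realFieldType) (q : R) N : 1 <= q ->
  1 + N%:R * (q - 1) <= q ^+ N.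
Proof.
move=> q1; elim: N => [|N IH]; first by rewrite mul0r addr0 expr0.
rewrite exprS -natr1.
have hN : 0 <= (N%:R : R) by rewrite ler0n.
have h1 : 0 <= (q - 1) * (q ^+ N - (1 + N%:R * (q - 1))).
  by apply: mulr_ge0; rewrite subr_ge0.
have h2 : 0 <= N%:R * ((q - 1) * (q - 1)).
  by apply: mulr_ge0 => //; apply: mulr_ge0; rewrite subr_ge0.
nra.
Qed.

Lemma le_of_pow (R : realType) (s m : R) : 0 <= s -> 0 <= m ->
  (forall N, s ^+ N <= N.+1%:R * m ^+ N) -> s <= m.
Proof.
move=> s0 m0 H; rewrite leNgt; apply/negP => hms.
have mp : 0 < m.
  rewrite lt_neqAle m0 andbT; apply/eqP => me.
  by have := H 1%N; rewrite !expr1 -me mulr0 => h; move: hms; rewrite -me ltNge h.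
pose q := s / m.
have q1 : 1 < q by rewrite /q ltr_pdivlMr // mul1r.
have hq : forall N, q ^+ N <= N.+1%:R.
  move=> N; have := H N; rewrite /q expr_div_n.
  rewrite ler_pdivrMr ?exprn_gt0 //.
pose eps := q - 1.
have ep : 0 < eps by rewrite /eps subr_gt0.
have hb := archi_boundP (ltW (divr_gt0 (ltr0n R 2) (mulr_gt0 ep ep))).
set N := Num.Def.archi_bound _ in hb.
have h1 := @bernoulli_ineq _ q N (ltW q1).
have h2 : (q ^+ N) ^+ 2 <= N%:R + N%:R + 1.
  by rewrite -natrD natr1 -exprM muln2 -addnn; exact: hq.
have h3 : 0 <= 1 + N%:R * (q - 1).
  by apply: addr_ge0 => //; apply: mulr_ge0; rewrite ?ler0n // subr_ge0 ltW.
have h4 : (1 + N%:R * (q - 1)) ^+ 2 <= (q ^+ N) ^+ 2.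
  by apply: lerXn2r => //; rewrite nnegrE // exprn_ge0 // (le_trans _ (ltW q1)).
have h5 : 2 < N%:R * (eps * eps) by rewrite -ltr_pdivrMr ?mulr_gt0.
have hN : 0 < (N%:R : R).
  rewrite lt_neqAle ler0n andbT; apply/eqP => hN0; move: h5; rewrite -hN0 mul0r.
  by rewrite ltNge ler0n.
have h6 : 2 * N%:R < N%:R * (N%:R * (eps * eps)) by rewrite mulrC ltr_pM2l.
have h7 : 0 <= N%:R * eps by rewrite mulr_ge0 // ltW.
rewrite /eps in h6 h7 ep.
have := le_trans h4 h2.
set n := (N%:R : R) in h6 h7 hN *. 
set t := q - 1 in h6 h7 ep *.
move=> h8. 
have e: (1 + n * t) ^+ 2 = 1 + 2 * (n * t) + n * (n * (t * t)) by ring.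
rewrite e in h8.
lra.
Qed.

Section Dich.
Variables (R : realType) (a : algC -> R).
Hypothesis ha : is_absval a.

Lemma av_nat_le1 (hna : forall p, prime p -> a p%:R <= 1) n : a n%:R <= 1.
Proof.
elim: n {-2}n (leqnn n) => [|N IH] n hn.
  by move: hn; rewrite leqn0 => /eqP ->; rewrite av0 // ler01.
case: n hn => [|[|n]] hn; first by rewrite av0 // ler01.
  by rewrite av1.
have n1 : (1 < n.+2)%N by [].
have pp := pdiv_prime n1.
rewrite -(divnK (pdiv_dvd n.+2)) natrM avM //.
apply: mulr_ile1; [exact: av_ge0|exact: av_ge0| |exact: (hna _ pp)].
apply: IH; rewrite -ltnS; apply: leq_trans hn.
by apply: ltn_Pdiv => //; apply: prime_gt1.
Qed.

Lemma ultra (hn : forall n : nat, a n%:R <= 1) x y :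
  a (x + y) <= Num.max (a x) (a y).
Proof.
have m0 : 0 <= Num.max (a x) (a y) by rewrite le_max av_ge0.
apply: le_of_pow; rewrite ?av_ge0 // => N.
rewrite -avX // exprDn.
apply: le_trans (av_sum ha _ _ _) _.
have -> : N.+1%:R * Num.max (a x) (a y) ^+ N =
   \sum_(i < N.+1) Num.max (a x) (a y) ^+ N.
  by rewrite sumr_const card_ord mulr_natl.
apply: ler_sum => i _.
rewrite -mulr_natr !avM // -[X in _ <= X]mulr1.
apply: ler_pM; rewrite ?mulr_ge0 ?av_ge0 ?hn //.
rewrite !avX // -[in X in _ <= X](subnK (ltnSE (ltn_ord i))) exprD.
apply: ler_pM; rewrite ?exprn_ge0 ?av_ge0 //;
  (apply: (lerXn2r _); [rewrite nnegrE av_ge0 // | rewrite nnegrE // | rewrite le_max lexx ?orbT //]).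
Qed.

Lemma dichotomy : extends_place_of_Q a ->
  (forall n : nat, a n%:R = n%:R) \/ (forall x y, a (x + y) <= Num.max (a x) (a y)).
Proof.
case => [hq | [p [pp ap hl]]].
  by left => n; have := hq n%:R; rewrite !ratr_nat normr_nat.
right; apply: ultra; apply: av_nat_le1 => l pl.
have [->|lp] := eqVneq l p; last by rewrite hl.
rewrite ap invf_le1 ?ltr0n ?prime_gt0 // ler1n prime_gt0 //.
Qed.
End Dich.

Definition Mx (R : realType) (t : R) : R := Num.max 1 t.

Section MxL.
Variable R : realType.
Implicit Types s t : R.
Lemma Mx_ge1 t : 1 <= Mx t. Proof. by rewrite /Mx le_max lexx. Qed.
Lemma Mx_gt0 t : 0 < Mx t. Proof. exact: lt_le_trans ltr01 (Mx_ge1 t). Qed.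
Lemma le_Mx t : t <= Mx t. Proof. by rewrite /Mx le_max lexx orbT. Qed.
Lemma Mx_le t s : 1 <= s -> t <= s -> Mx t <= s.
Proof. by move=> h1 h2; rewrite /Mx ge_max h1 h2. Qed.
Lemma Mx_mono t s : t <= s -> Mx t <= Mx s.
Proof. by move=> h; apply: Mx_le; [exact: Mx_ge1|exact: le_trans h (le_Mx s)]. Qed.
Lemma prod_ge1 I (r : seq I) (P : pred I) (F : I -> R) :
  (forall i, 1 <= F i) -> 1 <= \prod_(i <- r | P i) F i.
Proof.
move=> h; elim/big_rec: _ => // i x _ hx.
by rewrite -[1]mulr1; apply: ler_pM.
Qed.
Lemma prod_ge_one (n : nat) (F : 'I_n -> R) i :
  (forall i, 1 <= F i) -> F i <= \prod_(j < n) F j.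
Proof.
move=> h; rewrite (bigD1 i) //= -[X in X <= _]mulr1.
by apply: ler_pM; rewrite ?(le_trans ler01 (h i)) ?ler01 ?prod_ge1.
Qed.
Lemma ln_prod I (r : seq I) (P : pred I) (F : I -> R) :
  (forall i, 0 < F i) -> ln (\prod_(i <- r | P i) F i) = \sum_(i <- r | P i) ln (F i).
Proof.
move=> h.
have : 0 < \prod_(i <- r | P i) F i /\ ln (\prod_(i <- r | P i) F i) = \sum_(i <- r | P i) ln (F i).
  elim/big_rec2: _ => [|i y1 y2 _ [h1 h2]]; first by rewrite ln1.
  by split; [rewrite mulr_gt0|rewrite lnM ?posrE // h2].
by case.
Qed.
End MxL.

Section Bounds.
Variables (R : realType) (a : algC -> R).
Hypotheses (ha : is_absval a) (hpl : extends_place_of_Q a).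

Lemma sum_bound n (t : 'I_n -> algC) m : 0 <= m -> (forall i, a (t i) <= m) ->
  a (\sum_i t i) <= Mx (a n%:R) * m.
Proof.
move=> m0 ht; case: (dichotomy ha hpl) => [hn|hu].
  apply: le_trans (av_sum ha _ _ _) _.
  apply: le_trans (ler_sum _ (fun i _ => ht i)) _.
  rewrite sumr_const card_ord hn -[m *+ n]mulr_natl.
  by apply: ler_wpM2r => //; exact: le_Mx.
apply: le_trans (ler_peMl m0 (Mx_ge1 _)).
elim/big_rec: _ => [|i x _ hx]; first by rewrite av0.
by apply: le_trans (hu _ _) _; rewrite ge_max ht hx.
Qed.

Lemma two_bound u w : a (u + w) <= Mx (a 2) * Num.max (a u) (a w).
Proof.
have m0 : 0 <= Num.max (a u) (a w) by rewrite le_max av_ge0.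
case: (dichotomy ha hpl) => [hn|hu].
  apply: le_trans (avD ha _ _) _.
  apply: le_trans (ler_wpM2r m0 (le_Mx _)).
  rewrite (hn 2%N) mulr_natl mulr2n.
  by apply: lerD; rewrite le_max lexx ?orbT.
exact: le_trans (hu _ _) (ler_peMl m0 (Mx_ge1 _)).
Qed.

Definition CP (p : {poly algC}) := \prod_(i < size p) Mx (a p`_i).

Lemma CP_ge1 (p : {poly algC}) : 1 <= CP p.
Proof. by apply: prod_ge1 => i; exact: Mx_ge1. Qed.

Lemma coef_le_CP (p : {poly algC}) i : a p`_i <= CP p.
Proof.
have [hi|hi] := ltnP i (size p).
  apply: le_trans (le_Mx _) _.
  have := @prod_ge_one R (size p) (fun j => Mx (a p`_j)) (Ordinal hi) (fun j => Mx_ge1 _).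
  exact.
by rewrite nth_default // av0 // (le_trans ler01 (CP_ge1 p)).
Qed.

Lemma upper_m (p : {poly algC}) x :
  Mx (a p.[x]) <= Mx (a (size p)%:R) * CP p * Mx (a x) ^+ (size p).-1.
Proof.
have h1 : 1 <= Mx (a (size p)%:R) * CP p * Mx (a x) ^+ (size p).-1.
  rewrite -[1]mulr1 -[1 * 1]mulr1.
  by apply: ler_pM; [| |apply: ler_pM|apply: exprn_ege1]; rewrite ?ler01 ?Mx_ge1 ?CP_ge1.
apply: Mx_le => //.
rewrite horner_coef -mulrA.
apply: sum_bound; first by rewrite mulr_ge0 ?exprn_ge0 ?(le_trans ler01 (CP_ge1 p)) ?(le_trans ler01 (Mx_ge1 _)).
move=> i; rewrite avM // avX //.
apply: ler_pM; rewrite ?exprn_ge0 ?av_ge0 ?coef_le_CP //.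
apply: le_trans (ler_weXn2l (Mx_ge1 (a x)) (_ : (i <= (size p).-1)%N)).
  by apply: lerXn2r; rewrite ?nnegrE ?av_ge0 ?le_Mx ?(le_trans ler01 (Mx_ge1 _)).
by rewrite -ltnS prednK ?ltn_ord // (leq_ltn_trans (leq0n _) (ltn_ord i)).
Qed.

Lemma lower_m (p : {poly algC}) x : p != 0 ->
  Mx (a x) ^+ (size p).-1 <=
  (Mx (a (lead_coef p)^-1) * Mx (a 2) * Mx (a ((size p).-1)%:R) * CP p) ^+ (size p).-1
    * Mx (a p.[x]).
Proof.
move=> pn0.
set k := (size p).-1.
set Q := _ * CP p.
have Q1 : 1 <= Q.
  rewrite /Q -[1]mulr1 -[1 * 1]mulr1 -[1 * 1 * 1]mulr1.
  by repeat apply: ler_pM; rewrite ?ler01 ?Mx_ge1 ?CP_ge1.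
have Qk : 1 <= Q ^+ k by apply: exprn_ege1.
have Mp1 := Mx_ge1 (a p.[x]).
have RHS1 : 1 <= Q ^+ k * Mx (a p.[x]).
  by rewrite -[1]mulr1; apply: ler_pM; rewrite ?ler01.
case: (leP (a x) 1) => hx.
  have -> : Mx (a x) = 1 by apply/le_anti; rewrite Mx_ge1 Mx_le.
  by rewrite expr1n.
have -> : Mx (a x) = a x by rewrite /Mx max_r // ltW.
have hsize : size p = k.+1 by rewrite /k prednK // size_poly_gt0.
clearbody k.
have [k0|kpos] := eqVneq k 0%N.
  by move: RHS1; rewrite k0 !expr0.
set S := \sum_(i < k) p`_i * x ^+ i.
have hp : p.[x] = S + lead_coef p * x ^+ k.
  have -> : lead_coef p = p`_k by rewrite lead_coefE hsize.
  by rewrite /S horner_coef hsize big_ord_recr.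
have ax0 : 0 <= a x by rewrite av_ge0.
have hS : a S <= Mx (a k%:R) * (CP p * a x ^+ k.-1).
  apply: sum_bound; first by rewrite mulr_ge0 ?exprn_ge0 ?(le_trans ler01 (CP_ge1 p)).
  move=> i; rewrite avM // avX //.
  apply: ler_pM; rewrite ?exprn_ge0 ?av_ge0 ?coef_le_CP //.
  apply: ler_weXn2l; first exact: ltW.
  by rewrite -ltnS prednK ?ltn_ord // lt0n.
have hlc : a (lead_coef p) * a x ^+ k <= Mx (a 2) * Num.max (a p.[x]) (a S).
  rewrite -avX // -avM //.
  have -> : lead_coef p * x ^+ k = p.[x] + - S by rewrite hp addrAC subrr add0r.
  rewrite -[X in _ <= _ * Num.max _ X](avN ha).
  exact: two_bound.
have lcn0 : lead_coef p != 0 by rewrite lead_coef_eq0.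
have alc : 0 < a (lead_coef p) by rewrite lt_neqAle av_ge0 // eq_sym av_neq0.
have hx1 : a x ^+ k <= a (lead_coef p)^-1 * (Mx (a 2) * Num.max (a p.[x]) (a S)).
  by rewrite avV // ler_pdivlMl.
have hA : a (lead_coef p)^-1 <= Mx (a (lead_coef p)^-1) by exact: le_Mx.
have hkk : a x ^+ k = a x * a x ^+ k.-1 by rewrite -exprS prednK // lt0n.
have A0 : 0 <= a (lead_coef p)^-1 by rewrite av_ge0.
have B1 := Mx_ge1 (a (lead_coef p)^-1).
have B2 := Mx_ge1 (a 2).
have B3 := Mx_ge1 (a k%:R).
have B4 := CP_ge1 p.
have QkQ : Q <= Q ^+ k.
  by rewrite -[X in X <= _]expr1; apply: ler_weXn2l => //; rewrite lt0n.
have axk1 : 1 <= a x ^+ k.-1 by apply: exprn_ege1; exact: ltW.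
case: (leP (a S) (a p.[x])) => hm.
  rewrite max_l // in hx1.
  apply: (le_trans hx1).
  have M20 : 0 <= Mx (a 2) by exact: le_trans ler01 B2.
  have M10 : 0 <= Mx (a (lead_coef p)^-1) by exact: le_trans ler01 B1.
  have Mp0 : 0 <= Mx (a p.[x]) by exact: le_trans ler01 Mp1.
  have C1 : 1 <= Mx (a k%:R) * CP p by rewrite -[1]mulr1; apply: ler_pM; rewrite ?ler01.
  have e1 : a (lead_coef p)^-1 * (Mx (a 2) * a p.[x]) <=
      Mx (a (lead_coef p)^-1) * (Mx (a 2) * Mx (a p.[x])).
    apply: ler_pM => //; first by rewrite mulr_ge0 ?av_ge0.
    by apply: ler_wpM2l => //; exact: le_Mx.
  have hh : a (lead_coef p)^-1 * (Mx (a 2) * a p.[x]) <= Q * Mx (a p.[x]).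
    apply: le_trans e1 _.
    rewrite mulrA /Q -(mulrA _ (Mx (a k%:R))); apply: ler_wpM2r => //.
    by apply: ler_peMr => //; rewrite mulr_ge0.
  apply: le_trans hh _; apply: ler_wpM2r; rewrite ?(le_trans ler01 Mp1) //.
rewrite (max_r (ltW hm)) in hx1.
have hx2 : a x ^+ k <= Q * a x ^+ k.-1.
  apply: le_trans hx1 _.
  apply: le_trans (ler_wpM2r (mulr_ge0 (le_trans ler01 B2) (av_ge0 ha _)) hA) _.
  apply: le_trans (ler_wpM2l (le_trans ler01 B1) (ler_wpM2l (le_trans ler01 B2) hS)) _.
  by rewrite /Q !mulrA.
have hxQ : a x <= Q.
  rewrite hkk in hx2.
  by rewrite -(ler_pM2r (lt_le_trans ltr01 axk1)).
have : a x ^+ k <= Q ^+ k by apply: lerXn2r; rewrite ?nnegrE ?(le_trans ler01 Q1).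
move=> h; apply: le_trans h _.
by rewrite -[X in X <= _]mulr1; apply: ler_wpM2l; rewrite ?(le_trans ler01 Qk).
Qed.
End Bounds.

Definition lsum (R : realType) (a : algC -> R) (s : seq (R * algC)) : R :=
  \sum_(c <- s) c.1 * logp (a c.2).

Definition coefs (p : {poly algC}) := [seq p`_i | i <- iota 0 (size p)].
Definition Uz (p : {poly algC}) := (size p)%:R :: coefs p.
Definition Wz (p : {poly algC}) := (lead_coef p)^-1 :: 2 :: ((size p).-1)%:R :: coefs p.
Definition cl (R : realType) (c : R) (zs : seq algC) := [seq (c, z) | z <- zs].
Definition Ulist (R : realType) (p : {poly algC}) : seq (R * algC) := cl 1 (Uz p).
Definition Wlist (R : realType) (p : {poly algC}) : seq (R * algC) := cl ((size p).-1)%:R (Wz p).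

Lemma lsum_cat (R : realType) (a : algC -> R) s1 s2 : lsum a (s1 ++ s2) = lsum a s1 + lsum a s2.
Proof. by rewrite /lsum big_cat. Qed.

Lemma lsum_cl (R : realType) (a : algC -> R) c zs :
  lsum a (cl c zs) = c * \sum_(z <- zs) logp (a z).
Proof. by rewrite /lsum /cl big_map mulr_sumr. Qed.

Lemma sum_coefs (R : realType) (F : algC -> R) (p : {poly algC}) :
  \sum_(z <- coefs p) F z = \sum_(i < size p) F p`_i.
Proof. by rewrite /coefs big_map -(big_mkord xpredT (fun i => F p`_i)) /index_iota subn0. Qed.

Lemma logpE (R : realType) (t : R) : logp t = ln (Mx t).
Proof. by []. Qed.

Lemma logp_ge0 (R : realType) (t : R) : 0 <= logp t.
Proof. by rewrite logpE ln_ge0 // Mx_ge1. Qed.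

Lemma lnM' (R : realType) (x y : R) : 0 < x -> 0 < y -> ln (x * y) = ln x + ln y.
Proof. by move=> hx hy; apply: lnM; rewrite posrE. Qed.

Section LogB.
Variables (R : realType) (a : algC -> R).
Hypotheses (ha : is_absval a) (hpl : extends_place_of_Q a).

Lemma CP_gt0 (p : {poly algC}) : 0 < CP a p.
Proof. exact: lt_le_trans ltr01 (CP_ge1 _ _). Qed.

Lemma ln_CP (p : {poly algC}) : ln (CP a p) = \sum_(i < size p) logp (a p`_i).
Proof. by rewrite /CP ln_prod // => i; exact: Mx_gt0. Qed.

Lemma upper_log (p : {poly algC}) x :
  logp (a p.[x]) <= lsum a (Ulist R p) + ((size p).-1)%:R * logp (a x).
Proof.
have h := upper_m ha hpl p x.
have p1 : 0 < Mx (a (size p)%:R) * CP a p by rewrite mulr_gt0 ?Mx_gt0 // (lt_le_trans ltr01 (CP_ge1 _ _)).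
rewrite logpE; apply: le_trans (_ : _ <= ln (Mx (a (size p)%:R) * CP a p * Mx (a x) ^+ (size p).-1)) _.
  by rewrite ler_ln //; rewrite ?posrE ?mulr_gt0 ?exprn_gt0 ?Mx_gt0 ?CP_gt0.
rewrite lnM' ?exprn_gt0 ?Mx_gt0 // lnM' ?Mx_gt0 ?(lt_le_trans ltr01 (CP_ge1 _ _)) //.
rewrite lnXn ?Mx_gt0 // ln_CP /Ulist lsum_cl /Uz big_cons sum_coefs mul1r.
by rewrite mulr_natl.
Qed.

Lemma lower_log (p : {poly algC}) x : p != 0 ->
  ((size p).-1)%:R * logp (a x) <= lsum a (Wlist R p) + logp (a p.[x]).
Proof.
move=> pn0.
have h := lower_m ha hpl x pn0.
set Q := _ * CP a p in h.
have Q0 : 0 < Q by rewrite /Q !mulr_gt0 ?Mx_gt0 // (lt_le_trans ltr01 (CP_ge1 _ _)).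
have h' : ln (Mx (a x) ^+ (size p).-1) <= ln (Q ^+ (size p).-1 * Mx (a p.[x])).
  by rewrite ler_ln //; rewrite ?posrE ?mulr_gt0 ?exprn_gt0 ?Mx_gt0 ?CP_gt0.
apply: (le_trans _ (le_trans h' _)).
  by rewrite lnXn ?Mx_gt0 // mulr_natl.
rewrite lnM' ?exprn_gt0 ?Mx_gt0 // lnXn // /Q.
rewrite !lnM' ?Mx_gt0 ?mulr_gt0 ?(lt_le_trans ltr01 (CP_ge1 _ _)) //.
rewrite ln_CP /Wlist lsum_cl /Wz !big_cons sum_coefs; last first.
  all: try exact: Mx_gt0.
by rewrite mulr_natl !addrA.
Qed.
End LogB.

Lemma geom_cvg (R : realType) (u : nat -> R) (r K : R) :
  0 <= r -> r < 1 -> 0 <= K -> (forall n, 0 <= u n) ->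
  (forall n, `|u n.+1 - u n| <= K * (1 - r) * r ^+ n) ->
  cvgn u /\ forall n, u n - K * r ^+ n <= limn u /\ limn u <= u n + K * r ^+ n.
Proof.
move=> r0 r1 K0 u0 H.
pose w n := u n + K * r ^+ n.
pose z n := u n - K * r ^+ n.
have step n : u n.+1 - u n <= K * (1 - r) * r ^+ n /\ - (K * (1 - r) * r ^+ n) <= u n.+1 - u n.
  by have := H n; rewrite ler_norml => /andP[].
have hw : {homo w : n m / (n <= m)%N >-> (m <= n)%O}.
  apply/nonincreasing_seqP => n; rewrite /w exprS.
  have [h1 _] := step n.
  have t0 : 0 <= r ^+ n by rewrite exprn_ge0.
  set t := r ^+ n in h1 t0 *.
  have e1 : K * (1 - r) * t = K * t - K * (r * t) by ring.
  rewrite e1 in h1; lra.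
have hz : {homo z : n m / (n <= m)%N >-> (n <= m)%O}.
  apply/nondecreasing_seqP => n; rewrite /z exprS.
  have [_ h1] := step n.
  have t0 : 0 <= r ^+ n by rewrite exprn_ge0.
  set t := r ^+ n in h1 t0 *.
  have e1 : K * (1 - r) * t = K * t - K * (r * t) by ring.
  rewrite e1 in h1; lra.
have wlb : has_lbound (range w).
  exists 0 => _ [n _ <-]; rewrite /w addr_ge0 // mulr_ge0 // exprn_ge0 //.
have cw := nonincreasing_cvgn hw wlb.
have hr : (fun n => K * r ^+ n) @ \oo --> 0.
  rewrite -(mulr0 K); apply: cvgM; first exact: cvg_cst.
  by apply: cvg_expr; rewrite ger0_norm.
have eu : u = w \- (fun n => K * r ^+ n).
  by apply/funext => n; rewrite /w /= addrK.
have cu : u @ \oo --> inf (range w) - 0.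
  by rewrite eu; apply: cvgB.
have ez : z = u \- (fun n => K * r ^+ n) by apply/funext => n.
have cz : z @ \oo --> inf (range w) - 0 - 0 by rewrite ez; apply: cvgB.
rewrite !subr0 in cu cz.
have lu : limn u = inf (range w) by apply: cvg_lim.
split; first by apply/cvg_ex; exists (inf (range w)).
move=> n; split.
  have := nondecreasing_cvgn_le hz (cvgP _ cz) n.
  by rewrite (cvg_lim _ cz) // lu.
have := nonincreasing_cvgn_ge hw (cvgP _ cw) n.
by rewrite (cvg_lim _ cw) // lu.
Qed.

Section Integ.
Variables (R : realType) (dM : measure_display) (M : measurableType dM)
  (absv : M -> algC -> R) (mu : {measure set M -> \bar R}).
Hypothesis hmeas : forall x : algC, measurable_fun setT (fun v => absv v x).
Hypothesis hheight : forall x : algC,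
      ((weil_height R x)%:E = \int[mu]_v (logp (absv v x))%:E)%E.

Lemma logp_meas z : measurable_fun setT (fun v => logp (absv v z)).
Proof.
apply: (measurableT_comp (f := @ln R) (g := fun v => Num.max 1 (absv v z))).
  exact: measurable_realfun.measurable_ln.
by apply: measurable_realfun.measurable_maxr; [exact: measurable_cst | exact: hmeas].
Qed.

Lemma lsum_meas s : measurable_fun setT (fun v => lsum (absv v) s).
Proof.
elim: s => [|c s IH].
  by rewrite /lsum; under eq_fun do rewrite big_nil; exact: measurable_cst.
rewrite /lsum; under eq_fun do rewrite big_cons.
apply: measurable_realfun.measurable_funD => //.
by apply: measurable_realfun.measurable_funM; [exact: measurable_cst | exact: logp_meas].
Qed.

Lemma lsum_ge0 (a : algC -> R) s : (forall c, c \in s -> 0 <= c.1) -> 0 <= lsum a s.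
Proof.
move=> h; rewrite /lsum big_seq; apply: sumr_ge0 => c cs.
by rewrite mulr_ge0 ?h ?logp_ge0.
Qed.

Lemma lsum_int s : (forall c, c \in s -> 0 <= c.1) ->
  (\int[mu]_v (lsum (absv v) s)%:E = (\sum_(c <- s) c.1 * weil_height R c.2)%:E)%E.
Proof.
elim: s => [|c s IH] hs.
  rewrite big_nil /lsum; under eq_fun do rewrite big_nil.
  exact: integral0.
have hc : 0 <= c.1 by apply: hs; rewrite mem_head.
have hs' : forall c', c' \in s -> 0 <= c'.1 by move=> c' h; apply: hs; rewrite in_cons h orbT.
rewrite big_cons EFinD.
have -> : (fun v => (lsum (absv v) (c :: s))%:E) =
    (fun v => (c.1 * logp (absv v c.2))%:E + (lsum (absv v) s)%:E)%E.
  by apply/funext => v; rewrite /lsum big_cons EFinD.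
rewrite ge0_integralD //; first last.
- by apply/measurable_realfun.measurable_EFinP; exact: lsum_meas.
- by move=> v _; rewrite lee_fin lsum_ge0.
- by apply/measurable_realfun.measurable_EFinP; apply: measurable_realfun.measurable_funM; [exact: measurable_cst | exact: logp_meas].
- by move=> v _; rewrite lee_fin mulr_ge0 ?logp_ge0.
rewrite IH // EFinM.
under eq_fun do rewrite EFinM.
rewrite ge0_integralZl_EFin //; last by apply/measurable_realfun.measurable_EFinP; exact: logp_meas.
  by rewrite -hheight.
by move=> v _; rewrite lee_fin logp_ge0.
Qed.
End Integ.

Definition Lst (R : realType) (f g : {poly algC}) : seq (R * algC) :=
  Ulist R f ++ Ulist R g ++ Wlist R f ++ Wlist R g.

Lemma Lst_ge0 (R : realType) (f g : {poly algC}) c : c \in Lst R f g -> 0 <= c.1.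
Proof.
have hcl : forall (k : R) zs, 0 <= k -> c \in cl k zs -> 0 <= c.1.
  by move=> k zs k0 /mapP [z _ ->].
rewrite /Lst !mem_cat => /orP[|/orP[|/orP[|]]] h; apply: hcl h; by rewrite ?ler01 ?ler0n.
Qed.

Lemma step_bound (R : realType) (a : algC -> R) (ha : is_absval a)
  (hpl : extends_place_of_Q a) (f g : {poly algC}) (hf : f != 0) (hg : g != 0)
  x y (hxy : g.[y] = f.[x]) :
  `|((size g).-1)%:R * logp (a y) - ((size f).-1)%:R * logp (a x)| <= lsum a (Lst R f g).
Proof.
have h1 := lower_log ha hpl y hg.
have h2 := upper_log ha hpl f x.
have h3 := lower_log ha hpl x hf.
have h4 := upper_log ha hpl g y.
rewrite hxy in h1 h4.
rewrite /Lst !lsum_cat ler_norml.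
move: h1 h2 h3 h4.
set A := (size g).-1%:R * _. set B := (size f).-1%:R * _.
move=> h1 h2 h3 h4.
have hcl : forall (k : R) zs, 0 <= k -> 0 <= lsum a (cl k zs).
  by move=> k zs k0; apply: lsum_ge0 => c /mapP [z _ ->].
have q1 := hcl 1 (Uz f) ler01. have q2 := hcl 1 (Uz g) ler01.
have q3 := hcl _ (Wz f) (ler0n _ (size f).-1). have q4 := hcl _ (Wz g) (ler0n _ (size g).-1).
rewrite /Ulist /Wlist in h1 h2 h3 h4 *.
apply/andP; split; lra.
Qed.

Unset Implicit Arguments. Set Strict Implicit.
Theorem proposition4p2
  (R : realType)
  (dM : measure_display) (M : measurableType dM)
  (absv : M -> algC -> R)
  (mu : {measure set M -> \bar R})
  (habs : forall v, is_absval (absv v))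
  (hplace : forall v, extends_place_of_Q (absv v))
  (hmeas : forall x : algC, measurable_fun setT (fun v => absv v x))
  (hheight : forall x : algC,
      ((weil_height R x)%:E = \int[mu]_v (logp (absv v x))%:E)%E)
  (f g : {poly algC})
  (hdeg : (1 <= (size g).-1 < (size f).-1)%N)
  (P : nat -> algC) (hP : is_path f g P) :
  let d := (size f).-1 in
  let e := (size g).-1 in
  (forall v, cvg (G_seq d e (absv v) P @ \oo)) /\
  measurable_fun setT (fun v => G_C d e (absv v) P) /\
  exists hhat : R,
    ((fun n => (e%:R / d%:R) ^+ n * weil_height R (P n)) @ \oo --> hhat) /\
    (hhat%:E = \int[mu]_v (G_C d e (absv v) P)%:E)%E.
Proof.
move=> d e.
have /andP[e1 ed] := hdeg.
rewrite -/d -/e in e1 ed.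
have hf : f != 0.
  by apply/eqP => f0; move: ed; rewrite /d f0 size_poly0.
have hg : g != 0.
  by apply/eqP => g0; move: e1; rewrite /e g0 size_poly0.
have D0 : 0 < (d%:R : R) by rewrite ltr0n (leq_trans _ ed).
have E0 : 0 < (e%:R : R) by rewrite ltr0n.
have DE : (e%:R : R) < d%:R by rewrite ltr_nat.
pose r : R := e%:R / d%:R.
have r0 : 0 <= r by rewrite /r divr_ge0 // ltW.
have r1 : r < 1 by rewrite /r ltr_pdivrMr // mul1r.
pose Cst v := lsum (absv v) (Lst R f g).
have C0 v : 0 <= Cst v by apply: lsum_ge0 => c; exact: Lst_ge0.
pose Kc v := Cst v / (d%:R - e%:R).
have Kpos v : 0 <= Kc v by rewrite /Kc divr_ge0 // subr_ge0 ltW.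
have useq v n : G_seq d e (absv v) P n = r ^+ n * logp (absv v (P n)) by [].
have hstep v n : `|G_seq d e (absv v) P n.+1 - G_seq d e (absv v) P n| <=
    Kc v * (1 - r) * r ^+ n.
  rewrite !useq.
  have hb := step_bound (habs v) (hplace v) hf hg (hP n).
  rewrite -/d -/e -/(Cst v) in hb.
  have -> : r ^+ n.+1 * logp (absv v (P n.+1)) - r ^+ n * logp (absv v (P n)) =
     r ^+ n * ((e%:R * logp (absv v (P n.+1)) - d%:R * logp (absv v (P n))) / d%:R).
    rewrite exprS /r; field; exact: lt0r_neq0.
  have -> : Kc v * (1 - r) * r ^+ n = r ^+ n * (Cst v / d%:R).
    rewrite /Kc /r; field; rewrite ?lt0r_neq0 // subr_gt0 //.
  have Di : 0 <= (d%:R : R)^-1 by rewrite invr_ge0 ltW.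
  rewrite !normrM ger0_norm ?exprn_ge0 // [`|_^-1|]ger0_norm //.
  apply: ler_pM; rewrite ?exprn_ge0 ?lexx //.
  by apply: ler_pM => //; rewrite normr_ge0.
have hgeom v := geom_cvg r0 r1 (Kpos v) (fun n => mulr_ge0 (exprn_ge0 n r0) (logp_ge0 _)) (hstep v).
have part1 : forall v, cvg (G_seq d e (absv v) P @ \oo) by move=> v; case: (hgeom v).
have part2 : measurable_fun setT (fun v => G_C d e (absv v) P).
  apply: (measurable_realfun.measurable_fun_cvg (h := fun m v => G_seq d e (absv v) P m)).
    move=> m; apply: measurable_realfun.measurable_funM; first exact: measurable_cst.
    exact: logp_meas.
  by move=> v _; exact: part1.
split; first exact: part1.
split; first exact: part2.
pose Ksum := \sum_(c <- Lst R f g) c.1 * weil_height R c.2.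
have hG0 v : 0 <= G_C d e (absv v) P.
  apply: limr_ge; first exact: part1.
  by apply: nearW => n; rewrite useq mulr_ge0 ?exprn_ge0 ?logp_ge0.
have hGb v n := ((hgeom v).2 n).
have mseq n : measurable_fun setT (fun v => G_seq d e (absv v) P n).
  apply: measurable_realfun.measurable_funM; first exact: measurable_cst.
  exact: logp_meas.
have mK n : measurable_fun setT (fun v => Kc v * r ^+ n).
  apply: measurable_realfun.measurable_funM; last exact: measurable_cst.
  apply: measurable_realfun.measurable_funM; last exact: measurable_cst.
  exact: lsum_meas.
have hint n : (\int[mu]_v (G_seq d e (absv v) P n)%:E = (r ^+ n * weil_height R (P n))%:E)%E.
  under eq_fun do rewrite useq EFinM.
  rewrite ge0_integralZl_EFin ?exprn_ge0 //.
  - by rewrite -hheight EFinM.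
  - by move=> v _; rewrite lee_fin logp_ge0.
  - by apply/measurable_realfun.measurable_EFinP; exact: logp_meas.
have hB n : (\int[mu]_v (Kc v * r ^+ n)%:E = (r ^+ n / (d%:R - e%:R) * Ksum)%:E)%E.
  have -> : (fun v => (Kc v * r ^+ n)%:E) =
      (fun v => (r ^+ n / (d%:R - e%:R))%:E * (lsum (absv v) (Lst R f g))%:E)%E.
    by apply/funext => v; rewrite -EFinM /Kc /Cst; congr EFin; ring.
  rewrite ge0_integralZl_EFin //.
  - by rewrite lsum_int ?EFinM // => c; exact: Lst_ge0.
  - by move=> v _; rewrite lee_fin; exact: C0.
  - by apply/measurable_realfun.measurable_EFinP; exact: lsum_meas.
  - by rewrite divr_ge0 ?exprn_ge0 // subr_ge0 ltW.
set I := (\int[mu]_v (G_C d e (absv v) P)%:E)%E.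
have hup n : (I <= (r ^+ n * weil_height R (P n) + r ^+ n / (d%:R - e%:R) * Ksum)%:E)%E.
  rewrite EFinD -hint -hB -ge0_integralD //; first last.
  - by apply/measurable_realfun.measurable_EFinP.
  - by move=> v _; rewrite lee_fin mulr_ge0 ?exprn_ge0.
  - by apply/measurable_realfun.measurable_EFinP.
  - by move=> v _; rewrite lee_fin useq mulr_ge0 ?exprn_ge0 ?logp_ge0.
  apply: ge0_le_integral => //.
  - by move=> v _; rewrite lee_fin.
  - by apply/measurable_realfun.measurable_EFinP; exact: part2.
  - by apply/measurable_realfun.measurable_EFinP/measurable_realfun.measurable_funD.
  - by move=> v _; rewrite lee_fin; case: (hGb v n).
have hlo n : ((r ^+ n * weil_height R (P n))%:E <= I + (r ^+ n / (d%:R - e%:R) * Ksum)%:E)%E.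
  rewrite -hint -hB -ge0_integralD //; first last.
  - by apply/measurable_realfun.measurable_EFinP.
  - by move=> v _; rewrite lee_fin mulr_ge0 ?exprn_ge0.
  - by apply/measurable_realfun.measurable_EFinP; exact: part2.
  - by move=> v _; rewrite lee_fin.
  apply: ge0_le_integral => //.
  - by move=> v _; rewrite lee_fin useq mulr_ge0 ?exprn_ge0 ?logp_ge0.
  - by apply/measurable_realfun.measurable_EFinP.
  - apply/measurable_realfun.measurable_EFinP/measurable_realfun.measurable_funD => //.
  - move=> v _; rewrite -EFinD lee_fin; case: (hGb v n) => h1 _.
    by rewrite -lerBlDr.
have I0 : (0 <= I)%E by apply: integral_ge0 => v _; rewrite lee_fin.
have Ifin : I \is a fin_num.
  by rewrite ge0_fin_numE //; apply: le_lt_trans (hup 0%N) _; exact: ltry.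
exists (fine I); split; last by rewrite fineK.
pose c' := Ksum / (d%:R - e%:R).
have hr : (fun n => r ^+ n * c') @ \oo --> 0.
  rewrite -(mul0r c'); apply: cvgM; last exact: cvg_cst.
  by apply: cvg_expr; rewrite ger0_norm.
apply: (squeeze_cvgr (f := fun n => fine I - r ^+ n * c') (h := fun n => fine I + r ^+ n * c')).
- apply: nearW => n; apply/andP; split.
    have := hup n; rewrite -[I]fineK // lee_fin /c'.
    have -> : r ^+ n / (d%:R - e%:R) * Ksum = r ^+ n * (Ksum / (d%:R - e%:R)) by ring.
    by rewrite lerBlDr.
  have := hlo n; rewrite -[I]fineK // -EFinD lee_fin /c'.
  by have -> : r ^+ n / (d%:R - e%:R) * Ksum = r ^+ n * (Ksum / (d%:R - e%:R)) by ring.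
- rewrite -[X in _ --> X]subr0; apply: cvgB => //; exact: cvg_cst.
- rewrite -[X in _ --> X]addr0; apply: cvgD => //; exact: cvg_cst.
Qed.
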